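(* Let $t_1$, $\ell_1$, $t_2$, and $\ell_2$ be positive integers. If $\ell_1 < 2t_1$, then there are only finitely many matroids (up to isomorphism) with the $(t_1,\ell_1,t_2,\ell_2)$-property. The same is true if $\ell_2 < 2t_2$.
   Context: A matroid has the $(t_1,\ell_1,t_2,\ell_2)$-property if every $t_1$-element subset of its ground set is contained in an $\ell_1$-element circuit, and every $t_2$-element subset of its ground set is contained in an $\ell_2$-element cocircuit. *)

(* Defs.v *)
From mathcomp Require Import all_boot.
Set Implicit Arguments. Unset Strict Implicit. Unset Printing Implicit Defensive.

Record matroid (T : finType) := Matroid {
  indep : {set {set T}};
  indep_set0 : set0 \in indep;
  indep_sub : forall A B : {set T}, B \in indep -> A \subset B -> A \in indep;
  indep_aug : forall A B : {set T}, A \in indep -> B \in indep -> #|A| < #|B| ->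
    exists2 x, x \in B :\: A & x |: A \in indep
}.

Section MatroidNotions.
Variables (T : finType) (M : matroid T).

Definition is_basis (B : {set T}) : bool := maxset (mem (indep M)) B.

Definition is_circuit (C : {set T}) : bool := minset (fun D => D \notin indep M) C.

(* independent sets of the dual matroid M^* : sets avoiding some basis of M *)
Definition coindep (A : {set T}) : bool := [exists B, is_basis B && [disjoint A & B]].

Definition is_cocircuit (C : {set T}) : bool := minset (fun D => ~~ coindep D) C.

Definition tl_property (t1 l1 t2 l2 : nat) : Prop :=
  (forall X : {set T}, #|X| = t1 ->
     exists C : {set T}, [/\ is_circuit C, #|C| = l1 & X \subset C]) /\
  (forall X : {set T}, #|X| = t2 ->
     exists C : {set T}, [/\ is_cocircuit C, #|C| = l2 & X \subset C]).

End MatroidNotions.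

Definition matroid_iso (T1 T2 : finType) (M1 : matroid T1) (M2 : matroid T2) : Prop :=
  exists f : T1 -> T2, bijective f /\
    forall A : {set T1}, (A \in indep M1) = (f @: A \in indep M2).

Definition any_matroid := {T : finType & matroid T}.

(* Main.v *)
Require Import Defs.
From mathcomp Require Import all_boot.
From Stdlib Require List.
From mathcomp Require Import zify.
From Stdlib Require Import ClassicalEpsilon.
Set Implicit Arguments. Unset Strict Implicit. Unset Printing Implicit Defensive.

Section Basics.
Variables (T : finType) (M : matroid T).
Implicit Types X Y Z A B C D I J : {set T}.

Definition rk X := \max_(I | (I \in indep M) && (I \subset X)) #|I|.

Lemma rk_wit X : exists2 I, (I \in indep M) && (I \subset X) & #|I| = rk X.
Proof.
have P0 : (set0 \in indep M) && (set0 \subset X) by rewrite indep_set0 sub0set.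
rewrite /rk (@bigmax_eq_arg _ set0 (fun I => (I \in indep M) && (I \subset X)) (fun I => #|I|) P0).
case: arg_maxnP => //= I HI _; by exists I.
Qed.

Lemma rk_ge I X : I \in indep M -> I \subset X -> #|I| <= rk X.
Proof. by move=> h1 h2; apply: (leq_bigmax_cond (P := fun I => (I \in indep M) && (I \subset X))); rewrite h1. Qed.

Lemma rk_card X : rk X <= #|X|.
Proof. by apply/bigmax_leqP => I /andP[_ h]; apply: subset_leq_card. Qed.

Lemma rk_mono X Y : X \subset Y -> rk X <= rk Y.
Proof.
move=> sXY; have [I /andP[h1 h2] <-] := rk_wit X.
by apply: rk_ge h1 (subset_trans h2 sXY).
Qed.

Lemma rk_indep X : (X \in indep M) = (rk X == #|X|).
Proof.
apply/idP/idP => [h|].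
  by rewrite eqn_leq rk_card rk_ge.
have [I /andP[h1 h2] <-] := rk_wit X => /eqP e.
have -> : X = I by apply/eqP; rewrite eq_sym eqEcard h2 e leqnn.
done.
Qed.

Lemma indep_rk X : X \in indep M -> rk X = #|X|.
Proof. by rewrite rk_indep => /eqP. Qed.

Lemma rk_ext I Z : I \in indep M -> I \subset Z ->
  exists2 J, (J \in indep M) && (I \subset J) & (J \subset Z) && (#|J| == rk Z).
Proof.
move=> hI sIZ.
have [J0 /andP[hJ0 sJ0] eJ0] := rk_wit Z.
move Hk : (rk Z - #|I|) => k.
elim: k I hI sIZ Hk => [|k IH] I hI sIZ Hk.
  exists I; first by rewrite hI subxx.
  rewrite sIZ /= eqn_leq.
  move/eqP: Hk; rewrite subn_eq0 => ->; by rewrite rk_ge.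
have lt : #|I| < #|J0| by rewrite eJ0 -subn_gt0 Hk.
have [x /setDP[xJ0 xI] hx] := indep_aug hI hJ0 lt.
have sx : x |: I \subset Z by rewrite subUset sub1set (subsetP sJ0) // sIZ.
have Hk' : rk Z - #|x |: I| = k by rewrite cardsU1 xI add1n subnS Hk.
have [J /andP[h1 h2] h3] := IH _ hx sx Hk'.
by exists J => //; rewrite h1 (subset_trans _ h2) // subsetUr.
Qed.

Lemma rk_submod X Y : rk (X :|: Y) + rk (X :&: Y) <= rk X + rk Y.
Proof.
have [I /andP[hI sI] eI] := rk_wit (X :&: Y).
have [J /andP[hJ sIJ] /andP[sJ /eqP eJ]] := rk_ext hI (subset_trans sI (subset_trans (subsetIl X Y) (subsetUl X Y))).
have h1 : #|J :&: X| <= rk X by apply: rk_ge (subsetIr _ _); apply: indep_sub hJ (subsetIl _ _).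
have h2 : #|J :&: Y| <= rk Y by apply: rk_ge (subsetIr _ _); apply: indep_sub hJ (subsetIl _ _).
have h3 : #|I| <= #|J :&: X :&: Y|.
  apply: subset_leq_card; rewrite -setIA subsetI sIJ sI //.
have e1 : #|J :&: X| + #|J :&: Y| = #|J| + #|J :&: X :&: Y|.
  rewrite -cardsUI -setIUr (setIidPl sJ).
  by rewrite setIACA setIid setIA.
apply: leq_trans (leq_add h1 h2); rewrite e1 eJ -eI leq_add2l //.
Qed.
End Basics.

Section Circ.
Variables (T : finType) (M : matroid T).
Implicit Types X Y Z A B C D I J : {set T}.
Local Notation rk := (rk M).

Lemma indep_card_le I : I \in indep M -> #|I| <= rk setT.
Proof. by move=> h; apply: rk_ge h (subsetT _). Qed.

Lemma basis_card B : is_basis M B -> #|B| = rk setT.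
Proof.
move=> /maxsetP [hB maxB]; apply/eqP; rewrite eqn_leq indep_card_le //=.
rewrite leqNgt; apply/negP => lt.
have [J /andP[hJ _] eJ] := rk_wit M setT.
have lt' : #|B| < #|J| by rewrite eJ.
have [x /setDP[_ xB] hx] := indep_aug hB hJ lt'.
have := maxB _ hx (subsetUr _ _) => e.
by move: xB; rewrite -e setU11.
Qed.

Lemma coindepE A : coindep M A = (rk (~: A) == rk setT).
Proof.
apply/idP/idP.
  case/existsP => B /andP[hB dis].
  rewrite eqn_leq rk_mono ?subsetT //= -(basis_card hB).
  apply: rk_ge (maxsetp hB) _; by rewrite disjoint_sym disjoints_subset in dis.
move/eqP => e.
have [J /andP[hJ sJ] eJ] := rk_wit M (~: A).
apply/existsP; exists J; apply/andP; split.
  apply/maxsetP; split => // B hB sJB; apply/eqP; rewrite eq_sym eqEcard sJB /=.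
  by rewrite eJ e indep_card_le.
by rewrite disjoint_sym disjoints_subset.
Qed.

Lemma coindep_rk A : coindep M A -> rk (~: A) = rk setT.
Proof. by rewrite coindepE => /eqP. Qed.

Lemma ncoindep_rk A : ~~ coindep M A -> rk (~: A) < rk setT.
Proof. by rewrite coindepE ltn_neqAle rk_mono ?subsetT // andbT. Qed.

Lemma coindep0 : coindep M set0.
Proof. by rewrite coindepE setC0. Qed.

Lemma circuit_dep C : is_circuit M C -> C \notin indep M.
Proof. by move/minsetp. Qed.

Lemma circuit_proper C B : is_circuit M C -> B \proper C -> B \in indep M.
Proof.
move=> hC pBC; apply/negPn/negP => hB.
have e := minsetinf hC hB (proper_sub pBC).
by move: pBC; rewrite e properxx.
Qed.

Lemma cocircuit_ncoindep D : is_cocircuit M D -> ~~ coindep M D.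
Proof. by move/minsetp. Qed.

Lemma cocircuit_proper D B : is_cocircuit M D -> B \proper D -> coindep M B.
Proof.
move=> hC pBC; apply: contraT => hB.
have e := minsetinf hC hB (proper_sub pBC).
by move: pBC; rewrite e properxx.
Qed.

Lemma cocircuit_n0 D : is_cocircuit M D -> D != set0.
Proof. by move=> /cocircuit_ncoindep; apply: contra => /eqP ->; apply: coindep0. Qed.

Lemma circuit_n0 C : is_circuit M C -> C != set0.
Proof. by move=> /circuit_dep; apply: contra => /eqP ->; apply: indep_set0. Qed.

Lemma rk_lt_card X : X \notin indep M -> rk X < #|X|.
Proof. by rewrite rk_indep ltn_neqAle rk_card andbT. Qed.


Lemma orth C D : is_circuit M C -> is_cocircuit M D -> #|C :&: D| != 1.
Proof.
move=> hC hD; apply/negP => /cards1P [x ex].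
have xCD : x \in C :&: D by rewrite ex set11.
have /setIP [xC xD] := xCD.
have pD : D :\ x \proper D by rewrite properD1.
have h1 := coindep_rk (cocircuit_proper hD pD).
have h2 := ncoindep_rk (cocircuit_ncoindep hD).
have pC : C :\ x \proper C by rewrite properD1.
have hCx := circuit_proper hC pC.
have h3 : rk C <= rk (C :\ x).
  rewrite (indep_rk hCx) -ltnS.
  have := rk_lt_card (circuit_dep hC).
  by rewrite (cardsD1 x C) xC add1n.
have hy : forall y, (y \in C) && (y \in D) = (y == x).
  by move=> y; move: ex => /setP /(_ y); rewrite !inE.
have eU : C :|: ~: D = ~: (D :\ x).
  apply/setP => y; rewrite !inE.
  case: (y =P x) => [->|ne]; first by rewrite xC.
  have := hy y; move/eqP: ne => /negbTE ->.
  by case: (y \in C); case: (y \in D).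
have eI : C :&: ~: D = C :\ x.
  apply/setP => y; rewrite !inE.
  case: (y =P x) => [->|ne]; first by rewrite xD andbF.
  have := hy y; move/eqP: ne => /negbTE ->.
  by case: (y \in C); case: (y \in D).
have := rk_submod M C (~: D); rewrite eU eI h1.
move=> h; have : rk setT + rk (C :\ x) <= rk (C :\ x) + rk (~: D) by apply: leq_trans h _; rewrite leq_add2r.
by rewrite addnC leq_add2l leqNgt h2.
Qed.
End Circ.

Definition goodp (T : finType) (K : {set T}) (ss : seq {set T}) :=
  [/\ uniq ss, (forall S, S \in ss -> ~~ (S \subset K)) &
      (forall S S', S \in ss -> S' \in ss -> S != S' -> [disjoint S :\: K & S' :\: K])].

Lemma bigcup_seqP (T : finType) (x : T) (ss : seq {set T}) :
  reflect (exists2 S, S \in ss & x \in S) (x \in \bigcup_(S <- ss) S).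
Proof.
rewrite bigcup_seq; apply: (iffP bigcupP) => [[S h1 h2]|[S h1 h2]]; by exists S.
Qed.

Lemma goodp_cons (T : finType) (K : {set T}) S ss : goodp K (S :: ss) ->
  [/\ goodp K ss, ~~ (S \subset K) & S :&: \bigcup_(S' <- ss) S' \subset K].
Proof.
case => /= /andP[Sss u] h1 h2; split.
- split => // [S' hS'|S1 S2 h1' h2']; first by apply: h1; rewrite inE hS' orbT.
  by apply: h2; rewrite inE ?h1' ?h2' orbT.
- by apply: h1; rewrite inE eqxx.
apply/subsetP => x /setIP [xS /bigcup_seqP [S' hS' xS']].
apply: contraT => xK.
have ne : S != S' by apply: contraNneq Sss => ->.
have := h2 S S' (mem_head _ _) _ ne; rewrite inE hS' orbT => /(_ isT).
move/disjointFr => /(_ x); rewrite !inE xK xS xS' => /(_ isT).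
done.
Qed.

Section RankLem.
Variables (T : finType) (M : matroid T).
Implicit Types X Y Z A B C D I J K : {set T}.
Local Notation rk := (rk M).

Lemma rk_union_card X Y : rk (X :|: Y) <= rk X + #|Y|.
Proof.
apply: leq_trans (leq_addr (rk (X :&: Y)) _) _.
by apply: leq_trans (rk_submod M X Y) _; rewrite leq_add2l rk_card.
Qed.

Lemma cocirc_union K ss : goodp K ss -> (forall S, S \in ss -> is_cocircuit M S) ->
  rk (~: \bigcup_(S <- ss) S) + size ss <= rk setT.
Proof.
elim: ss => [|S ss IH] /=; first by rewrite big_nil setC0 addn0.
move=> /goodp_cons [g nS sI] hc.
have hS : is_cocircuit M S by apply: hc; rewrite mem_head.
have IH' := IH g (fun S' h => hc S' (introT orP (or_intror h))).
rewrite big_cons.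
have pr : S :&: \bigcup_(S' <- ss) S' \proper S.
  rewrite properEneq subsetIl andbT; apply: contraNneq nS => e.
  by rewrite -e.
have h1 := coindep_rk (cocircuit_proper hS pr).
have h2 := ncoindep_rk (cocircuit_ncoindep hS).
have := rk_submod M (~: S) (~: \bigcup_(S' <- ss) S').
rewrite -setCI h1 -setCU => h.
move: h h2 IH'; lia.
Qed.

Lemma codep_exists K ss : goodp K ss -> (forall S, S \in ss -> is_cocircuit M S) ->
  #|K| < size ss ->
  exists2 D, is_cocircuit M D & D \subset (\bigcup_(S <- ss) S) :\: K.
Proof.
move=> g hc lt.
have h := cocirc_union g hc.
have hP : ~~ coindep M ((\bigcup_(S <- ss) S) :\: K).
  rewrite coindepE; apply/negP => /eqP e.
  have e2 : ~: ((\bigcup_(S <- ss) S) :\: K) = ~: (\bigcup_(S <- ss) S) :|: K.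
    by rewrite setDE setCI setCK.
  have := rk_union_card (~: (\bigcup_(S <- ss) S)) K.
  rewrite -e2 e; move: h lt; lia.
have [D hD sD] := @minset_exists _ (fun D => ~~ coindep M D) _ hP.
by exists D.
Qed.

Lemma circ_union K ss : goodp K ss -> (forall S, S \in ss -> is_circuit M S) ->
  rk (\bigcup_(S <- ss) S) + size ss <= #|\bigcup_(S <- ss) S|.
Proof.
elim: ss => [|S ss IH] /=; first by rewrite big_nil addn0 rk_card.
move=> /goodp_cons [g nS sI] hc.
have hS : is_circuit M S by apply: hc; rewrite mem_head.
have IH' := IH g (fun S' h => hc S' (introT orP (or_intror h))).
rewrite big_cons.
have pr : S :&: \bigcup_(S' <- ss) S' \proper S.
  rewrite properEneq subsetIl andbT; apply: contraNneq nS => e.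
  by rewrite -e.
have h1 := indep_rk (circuit_proper hS pr).
have h2 := rk_lt_card (circuit_dep hS).
have := rk_submod M S (\bigcup_(S' <- ss) S').
rewrite h1 => h.
have := cardsUI S (\bigcup_(S' <- ss) S').
move: h h2 IH'; lia.
Qed.

Lemma dep_exists K ss : goodp K ss -> (forall S, S \in ss -> is_circuit M S) ->
  #|K| < size ss ->
  exists2 D, is_circuit M D & D \subset (\bigcup_(S <- ss) S) :\: K.
Proof.
move=> g hc lt.
have h := circ_union g hc.
have hP : (\bigcup_(S <- ss) S) :\: K \notin indep M.
  rewrite rk_indep; apply/negP => /eqP e.
  have h3 : rk ((\bigcup_(S <- ss) S) :\: K) <= rk (\bigcup_(S <- ss) S).
    by apply: rk_mono; apply: subsetDl.
  have h4 : #|\bigcup_(S <- ss) S| <= #|(\bigcup_(S <- ss) S) :\: K| + #|K|.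
    rewrite -(cardsID K (\bigcup_(S <- ss) S)) addnC leq_add2l.
    by apply: subset_leq_card; apply: subsetIr.
  move: h lt e h3 h4; lia.
have [D hD sD] := @minset_exists _ (fun D => D \notin indep M) _ hP.
by exists D.
Qed.
End RankLem.

Fixpoint Nf (p s : nat) : nat :=
  match s with 0 => 0 | s'.+1 => (p - 1) * s'.+1 * (Nf p s' + 1) end.

Section WSF.
Variable T : finType.

Lemma card_bigcup_le (I : finType) (P : pred I) (F : I -> {set T}) :
  #|\bigcup_(i | P i) F i| <= \sum_(i | P i) #|F i|.
Proof.
elim/big_rec2: _ => [|i n U _ le]; first by rewrite cards0.
by rewrite (leq_trans (leq_card_setU _ _).1) ?leq_add2l.
Qed.

Lemma wsf (p : nat) : forall s (F : {set {set T}}) (K0 : {set T}),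
  (forall S, S \in F -> #|S :\: K0| <= s) ->
  Nf p s < #|\bigcup_(S in F) (S :\: K0)| ->
  exists K : {set T}, exists ss : seq {set T},
   [/\ #|K| <= #|K0| + s, size ss = p, {subset ss <= F} & goodp K ss].
Proof.
elim => [|s IH] F K0 hF hN.
  exfalso; move: hN; rewrite /= ltnNge; move/negP; apply.
  rewrite leqn0 cards_eq0; apply/bigcup0P => S hS.
  by apply/eqP; rewrite -cards_eq0 -leqn0 hF.
pose Q (G : {set {set T}}) := [&& G \subset F, [forall S in G, ~~ (S \subset K0)] &
   [forall S in G, forall S' in G, (S != S') ==> [disjoint S :\: K0 & S' :\: K0]]].
have Q0 : Q set0.
  by rewrite /Q sub0set /=; apply/andP; split; apply/forall_inP => S; rewrite inE.
have [G mG _] := maxset_exists Q0.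
have /and3P [GF GK Gd] : Q G := maxsetp mG.
case: (leqP p #|G|) => hp.
  exists K0, (take p (enum G)); split.
  - by rewrite leq_addr.
  - by rewrite size_takel // -cardE.
  - by move=> S /mem_take; rewrite mem_enum => /(subsetP GF).
  split.
  - by apply: take_uniq; apply: enum_uniq.
  - by move=> S /mem_take; rewrite mem_enum => /(forall_inP GK).
  move=> S S' /mem_take; rewrite mem_enum => hS /mem_take; rewrite mem_enum => hS'.
  by move/forall_inP: Gd => /(_ S hS) /forall_inP /(_ S' hS') /implyP.
set A := \bigcup_(S in G) (S :\: K0).
have hA : #|A| <= (p - 1) * s.+1.
  rewrite /A; apply: leq_trans (card_bigcup_le (fun S => S \in G) (fun S => S :\: K0)) _.
  apply: leq_trans (@leq_sum _ (index_enum _) (fun S => S \in G) (fun S => #|S :\: K0|) (fun _ => s.+1) (fun S hS => hF S (subsetP GF S hS))) _.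
  rewrite sum_nat_const; apply: leq_mul => //; move: hp; lia.
have aK0 : forall a, a \in A -> a \notin K0.
  by move=> a /bigcupP [S _]; rewrite inE => /andP[].
pose U a := \bigcup_(S in F | a \in S) (S :\: K0).
have cov : \bigcup_(S in F) (S :\: K0) \subset \bigcup_(a in A) U a.
  apply/subsetP => x /bigcupP [S hS xS].
  case: (boolP [disjoint S :\: K0 & A]) => [dis|ndis].
    exfalso.
    have QG' : Q (S |: G).
      apply/and3P; split.
      - by rewrite subUset sub1set hS GF.
      - apply/forall_inP => S1 /setU1P [->|h]; last by move/forall_inP: GK; apply.
        by move: xS; rewrite inE => /andP [xK xS]; apply/negP => /subsetP /(_ x xS); apply/negP.
      apply/forall_inP => S1 h1; apply/forall_inP => S2 h2; apply/implyP => ne.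
      case/setU1P: h1 => [e1|h1]; case/setU1P: h2 => [e2|h2].
      - by move: ne; rewrite e1 e2 eqxx.
      - rewrite e1; apply: disjointWr dis; apply/subsetP => y hy; apply/bigcupP; by exists S2.
      - rewrite e2 disjoint_sym; apply: disjointWr dis; apply/subsetP => y hy; apply/bigcupP; by exists S1.
      by move/forall_inP: Gd => /(_ S1 h1) /forall_inP /(_ S2 h2) /implyP; apply.
    have e := maxsetsup mG QG' (subsetUr _ _).
    have SG : S \in G by rewrite -e setU11.
    have xA : x \in A by apply/bigcupP; exists S.
    by move: dis => /disjointFr /(_ xS); rewrite xA.
  rewrite -setI_eq0 in ndis; have [a] := set0Pn _ ndis.
  move=> /setIP [aS aA]; apply/bigcupP; exists a => //.
  apply/bigcupP; exists S => //; rewrite hS /=.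
  by move: aS; rewrite inE => /andP[].
have [a aA ha] : exists2 a, a \in A & Nf p s + 1 < #|U a|.
  case: (boolP [exists a in A, Nf p s + 1 < #|U a|]) => [/exists_inP [a h1 h2]|ne].
    by exists a.
  exfalso; move: hN; apply/negP; rewrite -leqNgt.
  apply: leq_trans (subset_leq_card cov) _.
  apply: leq_trans (card_bigcup_le (fun b => b \in A) U) _.
  have hle : forall b, b \in A -> #|U b| <= Nf p s + 1.
    move=> b hb; rewrite leqNgt; apply/negP => hlt.
    by move/negP: ne; apply; apply/exists_inP; exists b.
  apply: leq_trans (@leq_sum _ (index_enum _) (fun b => b \in A) (fun b => #|U b|) (fun _ => Nf p s + 1) hle) _.
  rewrite sum_nat_const /=.
  by apply: leq_mul.
pose F' := [set S in F | a \in S].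
have hF' : forall S, S \in F' -> #|S :\: (a |: K0)| <= s.
  move=> S; rewrite inE => /andP [hS aS].
  have e : S :\: (a |: K0) = (S :\: K0) :\ a.
    by apply/setP => y; rewrite !inE negb_or andbA [X in X && _]andbC.
  have := hF S hS; rewrite (cardsD1 a (S :\: K0)) e inE aS (negbTE (aK0 a aA)) /=.
  by rewrite add1n ltnS.
have hN' : Nf p s < #|\bigcup_(S in F') (S :\: (a |: K0))|.
  have sub : U a :\ a \subset \bigcup_(S in F') (S :\: (a |: K0)).
    apply/subsetP => y /setD1P [ya /bigcupP [S /andP[hS aS] yS]].
    apply/bigcupP; exists S; first by rewrite inE hS aS.
    by move: yS; rewrite !inE negb_or ya.
  apply: leq_trans (subset_leq_card sub).
  move: ha; rewrite (cardsD1 a (U a)); case: (a \in U a) => /=; lia.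
have [K [ss [h1 h2 h3 h4]]] := IH F' (a |: K0) hF' hN'.
exists K, ss; split => //.
- apply: leq_trans h1 _; rewrite cardsU1 (negbTE (aK0 a aA)) /=; lia.
by move=> S /h3; rewrite inE => /andP[].
Qed.
End WSF.

Section Chunk.
Variable T : finType.
Implicit Types X Y Z K : {set T}.

Lemma goodp_sub K (s s' : seq {set T}) : goodp K s -> {subset s' <= s} -> uniq s' -> goodp K s'.
Proof.
case=> u h1 h2 sub u'; split => // [S hS|S S' hS hS'].
  by apply: h1; apply: sub.
by apply: h2; apply: sub.
Qed.

Lemma chunk (Q R : {set T} -> Prop) K
  (hex : forall ss, goodp K ss -> (forall S, S \in ss -> R S) -> #|K| < size ss ->
          exists2 D, Q D & D \subset (\bigcup_(S <- ss) S) :\: K) :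
  forall j ss, goodp K ss -> (forall S, S \in ss -> R S) -> j * (#|K|).+1 <= size ss ->
  exists f : nat -> {set T},
    (forall i, i < j -> Q (f i) /\ f i \subset (\bigcup_(S <- ss) S) :\: K) /\
    (forall i1 i2, i1 < j -> i2 < j -> i1 != i2 -> [disjoint f i1 & f i2]).
Proof.
elim => [|j IH] ss g hR hs.
  by exists (fun _ => set0); split.
set k := (#|K|).+1.
have e := cat_take_drop k ss.
have [u _ _] := g.
have g1 : goodp K (take k ss).
  by apply: goodp_sub g _ (take_uniq _ u) => S /mem_take.
have g2 : goodp K (drop k ss).
  by apply: goodp_sub g _ (drop_uniq _ u) => S /mem_drop.
have hsz : size ss >= k by move: hs; rewrite mulSn; lia.
have hk : #|K| < size (take k ss) by rewrite size_takel.
have [D0 hQ0 sD0] := hex _ g1 (fun S h => hR S (mem_take h)) hk.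
have hs2 : j * k <= size (drop k ss) by rewrite size_drop; move: hs; rewrite mulSn; lia.
have [f' [hf1 hf2]] := IH _ g2 (fun S h => hR S (mem_drop h)) hs2.
have dis : [disjoint (\bigcup_(S <- take k ss) S) :\: K & (\bigcup_(S <- drop k ss) S) :\: K].
  rewrite -setI_eq0; apply/eqP/setP => x; rewrite !inE.
  apply/negP => /andP [/andP [xK /bigcup_seqP [S hS xS]] /andP [_ /bigcup_seqP [S' hS' xS']]].
  have ne : S != S'.
    have ucat : uniq (take k ss ++ drop k ss) by rewrite cat_take_drop.
    move: ucat; apply: contraTneq => eS; rewrite cat_uniq; apply/negP => /and3P [_ /hasPn hh _].
    by move: (hh S' hS'); rewrite -eS hS.
  have [_ _ h2] := g.
  have := h2 S S' (mem_take hS) (mem_drop hS') ne.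
  by move/disjointFr => /(_ x); rewrite !inE xK xS xS' => /(_ isT).
exists (fun i => if i == 0 then D0 else f' i.-1); split.
  move=> [|i] /= hi; first by split => //; apply: subset_trans sD0 _; apply: setSD; apply/subsetP => x /bigcup_seqP [S hS xS]; apply/bigcup_seqP; exists S => //; apply: mem_take hS.
  have [h1 h2] := hf1 i hi; split => //; apply: subset_trans h2 _; apply: setSD; apply/subsetP => x /bigcup_seqP [S hS xS]; apply/bigcup_seqP; exists S => //; apply: mem_drop hS.
move=> [|i1] [|i2] //= h1 h2 ne.
- have [_ s2] := hf1 i2 h2; apply: disjointWr s2 _; apply: disjointWl sD0 _; exact: dis.
- have [_ s1] := hf1 i1 h1; rewrite disjoint_sym; apply: disjointWr s1 _; apply: disjointWl sD0 _; exact: dis.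
by apply: hf2.
Qed.
End Chunk.

Section Final.
Variable T : finType.

Lemma exists_card_set (x : T) n : 0 < n -> n <= #|T| ->
  exists X : {set T}, x \in X /\ #|X| = n.
Proof.
move=> n0 nT.
set s := take n.-1 (enum [set~ x]).
have hs : size s = n.-1.
  rewrite size_takel // -cardE cardsC1; move: n0 nT; lia.
have xs : x \notin s.
  by apply/negP => /mem_take; rewrite mem_enum !inE eqxx.
exists (x |: [set y in s]); split; first by rewrite setU11.
rewrite cardsU1 inE (negbTE xs) cardsE /= (card_uniqP _).
  by rewrite hs; move: n0; lia.
by apply: take_uniq; apply: enum_uniq.
Qed.

Lemma disj_count (Z : {set T}) (f : nat -> {set T}) j :
  (forall i1 i2, i1 < j -> i2 < j -> i1 != i2 -> [disjoint f i1 & f i2]) ->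
  (forall i, i < j -> 1 < #|Z :&: f i|) -> 2 * j <= #|Z|.
Proof.
move=> hd hc.
suff : forall j', j' <= j -> 2 * j' <= #|Z :&: \bigcup_(i < j') f i|.
  move/(_ j (leqnn j)) => h; apply: leq_trans h _; apply: subset_leq_card; apply: subsetIl.
elim => [|j' IH] hj; first by rewrite muln0.
rewrite big_ord_recr /= setIUr cardsU.
have -> : Z :&: \bigcup_(i < j') f (widen_ord (leqnSn j') i) :&: (Z :&: f j') = set0.
  apply/eqP; rewrite -subset0; apply/subsetP => x; rewrite !inE => /andP [/andP [_ /bigcupP [i _ h1]] /andP [_ h2]].
  have := hd i j' (ltn_trans (ltn_ord i) hj) hj; rewrite /= neq_ltn ltn_ord => /(_ isT).
  by move/disjointFr => /(_ x h1); rewrite h2.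
rewrite cards0 subn0.
have h3 := IH (ltnW hj); have h4 := hc j' hj.
rewrite mulnS addnC; exact: leq_add h3 h4.
Qed.

Lemma reps (f : nat -> {set T}) j (x0 : T) :
  (forall i1 i2, i1 < j -> i2 < j -> i1 != i2 -> [disjoint f i1 & f i2]) ->
  (forall i, i < j -> f i != set0) ->
  exists X : {set T}, #|X| = j /\ (forall i, i < j -> exists2 x, x \in X & x \in f i)
     /\ (forall x, x \in X -> exists2 i, i < j & x \in f i).
Proof.
move=> hd hn.
pose rep i := odflt x0 [pick x in f i].
have hrep : forall i, i < j -> rep i \in f i.
  move=> i hi; rewrite /rep; case: pickP => //= h.
  by move: (hn i hi); case/set0Pn => y; rewrite h.
exists ((fun i : 'I_j => rep (nat_of_ord i)) @: setT); split; [|split].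
- rewrite card_imset ?cardsT ?card_ord //.
  move=> i i' e; apply/val_inj/eqP; apply: contraT => ne.
  have := hd i i' (ltn_ord i) (ltn_ord i') ne.
  move/disjointFr => /(_ (rep i) (hrep i (ltn_ord i))). rewrite e (hrep i' (ltn_ord i')). by [].
- move=> i hi; exists (rep i); last by apply: hrep.
  by apply/imsetP; exists (Ordinal hi).
move=> x /imsetP [i _ ->]; exists (nat_of_ord i) => //. exact: hrep (ltn_ord i).
Qed.
End Final.

Section Bounds.
Variables (T : finType) (M : matroid T).

Lemma bound1 t1 l1 t2 l2 : 0 < t1 -> 0 < t2 -> l1 < 2 * t1 ->
  tl_property M t1 l1 t2 l2 -> #|T| <= t2 + Nf (t1 * l2.+1) l2.
Proof.
move=> t1p t2p hl [hC hD].
rewrite leqNgt; apply/negP => big.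
have : 0 < #|T| by move: big; lia.
case/card_gt0P => x0 _.
pose Fam := [set D | is_cocircuit M D & #|D| == l2].
have cov : \bigcup_(D in Fam) (D :\: set0) = setT.
  apply/eqP; rewrite eqEsubset subsetT /=; apply/subsetP => x _.
  have t2T : t2 <= #|T| by move: big; lia.
  have [X [xX cX]] := exists_card_set x t2p t2T.
  have [D [h1 h2 h3]] := hD X cX.
  apply/bigcupP; exists D; first by rewrite inE h1 h2 eqxx.
  by rewrite setD0 (subsetP h3).
have hF : forall S, S \in Fam -> #|S :\: set0| <= l2.
  by move=> S; rewrite inE setD0 => /andP [_ /eqP ->].
have hN : Nf (t1 * l2.+1) l2 < #|\bigcup_(D in Fam) (D :\: set0)|.
  by rewrite cov cardsT; move: big; lia.
have [K [ss [h1 h2 h3 h4]]] := wsf hF hN.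
rewrite cards0 add0n in h1.
have hex : forall ss', goodp K ss' -> (forall S, S \in ss' -> is_cocircuit M S) -> #|K| < size ss' ->
   exists2 D, is_cocircuit M D & D \subset (\bigcup_(S <- ss') S) :\: K.
  by move=> ss' g hc lt; apply: codep_exists g hc lt.
have hR : forall S, S \in ss -> is_cocircuit M S.
  by move=> S /h3; rewrite inE => /andP [].
have hsz : t1 * (#|K|).+1 <= size ss by rewrite h2 leq_mul2l ltnS h1 orbT.
have [f [hf1 hf2]] := chunk hex h4 hR hsz.
have hn : forall i, i < t1 -> f i != set0.
  by move=> i hi; have [hq _] := hf1 i hi; apply: cocircuit_n0 hq.
have [X [cX [hX1 hX2]]] := reps x0 hf2 hn.
have [C [hCc hCl hXC]] := hC X cX.
have : 2 * t1 <= #|C|.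
  apply: disj_count hf2 _ => i hi.
  have [x xX xf] := hX1 i hi.
  have [hq _] := hf1 i hi.
  have := orth hCc hq.
  have : 0 < #|C :&: f i| by apply/card_gt0P; exists x; rewrite inE xf (subsetP hXC).
  lia.
by rewrite hCl leqNgt hl.
Qed.

Lemma bound2 t1 l1 t2 l2 : 0 < t1 -> 0 < t2 -> l2 < 2 * t2 ->
  tl_property M t1 l1 t2 l2 -> #|T| <= t1 + Nf (t2 * l1.+1) l1.
Proof.
move=> t1p t2p hl [hC hD].
rewrite leqNgt; apply/negP => big.
have : 0 < #|T| by move: big; lia.
case/card_gt0P => x0 _.
pose Fam := [set D | is_circuit M D & #|D| == l1].
have cov : \bigcup_(D in Fam) (D :\: set0) = setT.
  apply/eqP; rewrite eqEsubset subsetT /=; apply/subsetP => x _.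
  have t1T : t1 <= #|T| by move: big; lia.
  have [X [xX cX]] := exists_card_set x t1p t1T.
  have [D [h1 h2 h3]] := hC X cX.
  apply/bigcupP; exists D; first by rewrite inE h1 h2 eqxx.
  by rewrite setD0 (subsetP h3).
have hF : forall S, S \in Fam -> #|S :\: set0| <= l1.
  by move=> S; rewrite inE setD0 => /andP [_ /eqP ->].
have hN : Nf (t2 * l1.+1) l1 < #|\bigcup_(D in Fam) (D :\: set0)|.
  by rewrite cov cardsT; move: big; lia.
have [K [ss [h1 h2 h3 h4]]] := wsf hF hN.
rewrite cards0 add0n in h1.
have hex : forall ss', goodp K ss' -> (forall S, S \in ss' -> is_circuit M S) -> #|K| < size ss' ->
   exists2 D, is_circuit M D & D \subset (\bigcup_(S <- ss') S) :\: K.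
  by move=> ss' g hc lt; apply: dep_exists g hc lt.
have hR : forall S, S \in ss -> is_circuit M S.
  by move=> S /h3; rewrite inE => /andP [].
have hsz : t2 * (#|K|).+1 <= size ss by rewrite h2 leq_mul2l ltnS h1 orbT.
have [f [hf1 hf2]] := chunk hex h4 hR hsz.
have hn : forall i, i < t2 -> f i != set0.
  by move=> i hi; have [hq _] := hf1 i hi; apply: circuit_n0 hq.
have [X [cX [hX1 hX2]]] := reps x0 hf2 hn.
have [C [hCc hCl hXC]] := hD X cX.
have : 2 * t2 <= #|C|.
  apply: disj_count hf2 _ => i hi.
  have [x xX xf] := hX1 i hi.
  have [hq _] := hf1 i hi.
  have := orth hq hCc; rewrite setIC.
  have : 0 < #|C :&: f i| by apply/card_gt0P; exists x; rewrite inE xf (subsetP hXC).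
  lia.
by rewrite hCl leqNgt hl.
Qed.
End Bounds.

Section Transport.
Variables (T T' : finType) (M : matroid T) (f : T -> T') (g : T' -> T).
Hypotheses (fK : cancel f g) (gK : cancel g f).

Definition tS : {set {set T'}} := [set f @: A | A : {set T} in indep M].

Lemma finj : injective f. Proof. exact: can_inj fK. Qed.

Lemma tS_mem (A : {set T}) : (f @: A \in tS) = (A \in indep M).
Proof.
apply/imsetP/idP => [[A0 h e]|h]; last by exists A.
by move: (imset_inj finj e) => ->.
Qed.

Lemma tS_img (A' : {set T'}) : A' = f @: (g @: A').
Proof.
rewrite -imset_comp; apply/setP => y; apply/idP/imsetP => [h|[x h ->]] /=.
  by exists y => //; rewrite gK.
by rewrite gK.
Qed.

Lemma tS_matroid : exists M' : matroid T', indep M' = tS.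
Proof.
have h0 : set0 \in tS by rewrite -(imset0 f) tS_mem indep_set0.
have hsub : forall A B : {set T'}, B \in tS -> A \subset B -> A \in tS.
  move=> A B; rewrite {1}(tS_img B) tS_mem => hB sAB; rewrite (tS_img A) tS_mem.
  apply: indep_sub hB _; apply/subsetP => x /imsetP [y yA ->].
  by apply/imsetP; exists y => //; apply: (subsetP sAB).
have haug : forall A B : {set T'}, A \in tS -> B \in tS -> #|A| < #|B| ->
    exists2 x, x \in B :\: A & x |: A \in tS.
  move=> A B; rewrite (tS_img B) (tS_img A) !tS_mem !(card_imset _ finj).
  move=> hA hB lt; have [x /setDP [xB xA] hx] := indep_aug hA hB lt.
  exists (f x).
    by rewrite inE !(mem_imset _ _ finj) xB xA.
  by rewrite -imsetU1 tS_mem.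
by exists (Matroid h0 hsub haug).
Qed.

Lemma tS_iso (M' : matroid T') : indep M' = tS -> matroid_iso M M'.
Proof.
move=> e; exists f; split; first by exists g.
by move=> A; rewrite e tS_mem.
Qed.
End Transport.

Definition mkM (n : nat) (S : {set {set 'I_n}}) : option (matroid 'I_n) :=
  match excluded_middle_informative (exists M : matroid 'I_n, indep M = S) with
  | left h => Some (proj1_sig (constructive_indefinite_description _ h))
  | right _ => None
  end.

Lemma mkM_spec n S : (exists M : matroid 'I_n, indep M = S) ->
  exists M', mkM S = Some M' /\ indep M' = S.
Proof.
move=> h; rewrite /mkM; case: excluded_middle_informative => [h'|//].
eexists; split; first by reflexivity.
by case: constructive_indefinite_description.
Qed.

Definition msn (n : nat) : list any_matroid :=
  List.flat_map (fun S => match mkM S with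
     | Some M' => cons (existT (fun T : finType => matroid T) _ M') nil
     | None => nil end) (enum [set: {set {set 'I_n}}]).

Definition msall (B : nat) : list any_matroid := List.flat_map msn (iota 0 B.+1).

Lemma In_mem (U : eqType) (x : U) (s : seq U) : x \in s -> List.In x s.
Proof.
elim: s => //= y s IH; rewrite inE => /orP [/eqP ->|h]; [by left | by right; apply: IH].
Qed.

Lemma msall_spec B (T : finType) (M : matroid T) : #|T| <= B ->
  exists2 N, List.In N (msall B) & matroid_iso M (projT2 N).
Proof.
move=> hB.
pose f : T -> 'I_#|T| := enum_rank.
have fK : cancel f enum_val by apply: enum_rankK.
have gK : cancel enum_val f by apply: enum_valK.
have [M0 e0] := tS_matroid M fK gK.
have [M' [e1 e2]] := mkM_spec (ex_intro _ M0 e0).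
exists (existT (fun T : finType => matroid T) _ M').
  rewrite /msall; apply/List.in_flat_map; exists #|T|; split.
    by apply: In_mem; rewrite mem_iota /= add0n ltnS.
  rewrite /msn; apply/List.in_flat_map; exists (tS M f); split.
    by apply: In_mem; rewrite mem_enum in_setT.
  by rewrite e1; left.
by apply: tS_iso fK gK _ e2.
Qed.


Unset Implicit Arguments.

Theorem theorem3p3 (t1 l1 t2 l2 : nat) :
  0 < t1 -> 0 < l1 -> 0 < t2 -> 0 < l2 ->
  (l1 < 2 * t1) \/ (l2 < 2 * t2) ->
  exists ms : seq any_matroid,
    forall (T : finType) (M : matroid T), tl_property M t1 l1 t2 l2 ->
      exists2 N, List.In N ms & matroid_iso M (projT2 N).
Proof.
move=> t1p l1p t2p l2p hl.
exists (msall ((t2 + Nf (t1 * l2.+1) l2) + (t1 + Nf (t2 * l1.+1) l1))) => T M hP.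
apply: msall_spec.
case: hl => hl.
  by apply: leq_trans (bound1 t1p t2p hl hP) (leq_addr _ _).
by apply: leq_trans (bound2 t1p t2p hl hP) (leq_addl _ _).
Qed.
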